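(* Let $k \geq 1$, let $r > 0$, $\gamma' \geq 0$, $\gamma \geq 12 k$, let $T \in \mathbb{N}$, and let $K_1, \dots, K_T$ be convex subsets of $\mathbb{R}^d$. Let $V \subset \mathbb{R}^d$ be a linear subspace of dimension $d-k$. Consider the cylinder $C = \{y \in \mathbb{R}^d : \|P_V y\| \leq \gamma' r\}$ and let \[ \tilde{\Omega} = \Big\{ y \in C \;:\; \exists (y_t)_{t \in \{1,\dots,T\}} \text{ with } y_T = y,\ y_t \in K_t \cap C \text{ for all } t, \text{ and } \sum_{t=1}^{T-1} \|y_t - y_{t+1}\| \leq r \Big\}. \] Assume that $\mathbb{S} := \{\theta \in V^{\perp} : \|\theta\| = \gamma r\} \subset P_{V^{\perp}} \tilde{\Omega}$. Then there exists a sequence $(Y_t)_{t \in \{1,\dots,T\}}$ with $Y_t \in K_t \cap V$ for all $t$ and \[ \sum_{t=1}^{T-1} \|Y_t - Y_{t+1}\| \leq \left(1 + \frac{2 + 4\gamma'}{\gamma}\, k\right) r. \]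
   Context: $\|\cdot\|$ is the Euclidean norm on $\mathbb{R}^d$, $V^{\perp}$ is the orthogonal complement of $V$, and $P_W$ denotes the orthogonal projection onto a subspace $W$. *)

(* Defs.v *)
From HB Require Import structures.
From mathcomp Require Import all_boot all_order all_algebra.
Set Implicit Arguments. Unset Strict Implicit. Unset Printing Implicit Defensive.
Import Order.TTheory GRing.Theory Num.Theory.
Local Open Scope ring_scope.

(* Vectors of R^d are row vectors 'rV[R]_d; subspaces are row spaces of
   square matrices 'M[R]_d (mxalgebra), membership (v <= W)%MS. *)

Definition enorm (R : rcfType) (d : nat) (v : 'rV[R]_d) : R :=
  Num.sqrt (\sum_(i < d) v 0 i ^+ 2).

Definition orthc (R : rcfType) (d : nat) (W : 'M[R]_d) : 'M[R]_d := kermx W^T.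

(* w is the orthogonal projection P_W y of y onto the row space of W:
   w \in W and y - w \in W^perp (this characterizes P_W y uniquely). *)
Definition is_orth_proj (R : rcfType) (d : nat) (W : 'M[R]_d)
  (y w : 'rV[R]_d) : Prop :=
  (w <= W)%MS /\ (y - w <= orthc W)%MS.

Definition convex_set (R : rcfType) (d : nat) (K : 'rV[R]_d -> Prop) : Prop :=
  forall x y (l : R), K x -> K y -> 0 <= l -> l <= 1 ->
    K (l *: x + (1 - l) *: y).

(* Main.v *)
Require Import Defs.
From HB Require Import structures.
From mathcomp Require Import all_boot all_order all_algebra.
From mathcomp Require Import ring lra.
From Stdlib Require Import Classical ClassicalEpsilon.
Import Order.TTheory GRing.Theory Num.Theory.
Local Open Scope ring_scope.
Set Implicit Arguments. Unset Strict Implicit. Unset Printing Implicit Defensive.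

Section Norm.
Variables (R : rcfType) (d : nat).
Implicit Types (u v w : 'rV[R]_d).

Definition dot u v : R := \sum_(i < d) u 0 i * v 0 i.

Lemma dotC u v : dot u v = dot v u.
Proof. by apply: eq_bigr => i _; rewrite mulrC. Qed.
Lemma dotDl u v w : dot (u + v) w = dot u w + dot v w.
Proof. by rewrite /dot -big_split; apply: eq_bigr => i _; rewrite !mxE mulrDl. Qed.
Lemma dotZl (a : R) u v : dot (a *: u) v = a * dot u v.
Proof. by rewrite /dot mulr_sumr; apply: eq_bigr => i _; rewrite !mxE mulrA. Qed.
Lemma dotNl u v : dot (- u) v = - dot u v.
Proof. by rewrite -scaleN1r dotZl mulN1r. Qed.
Lemma dotBl u v w : dot (u - v) w = dot u w - dot v w.
Proof. by rewrite dotDl dotNl. Qed.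
Lemma dotDr u v w : dot u (v + w) = dot u v + dot u w.
Proof. by rewrite dotC dotDl !(dotC u). Qed.
Lemma dotZr (a : R) u v : dot u (a *: v) = a * dot u v.
Proof. by rewrite dotC dotZl dotC. Qed.
Lemma dotBr u v w : dot u (v - w) = dot u v - dot u w.
Proof. by rewrite dotC dotBl !(dotC u). Qed.
Lemma dot0l u : dot 0 u = 0.
Proof. by rewrite /dot big1 // => i _; rewrite mxE mul0r. Qed.
Lemma dot0r u : dot u 0 = 0.
Proof. by rewrite dotC dot0l. Qed.
Lemma dot_suml (I : Type) (s : seq I) (P : pred I) (F : I -> 'rV[R]_d) v :
  dot (\sum_(i <- s | P i) F i) v = \sum_(i <- s | P i) dot (F i) v.
Proof.
elim/big_rec2: _ => [|i x y _ <-]; first by rewrite dot0l.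
by rewrite dotDl.
Qed.
Lemma dot_ge0 u : 0 <= dot u u.
Proof. by apply: sumr_ge0 => i _; rewrite -expr2 sqr_ge0. Qed.
Lemma dot_eq0 u : dot u u = 0 -> u = 0.
Proof.
move=> /eqP; rewrite psumr_eq0 => [/allP H|i _]; last by rewrite -expr2 sqr_ge0.
apply/rowP => i; rewrite mxE.
have := H i (mem_index_enum _); rewrite /= -expr2 sqrf_eq0 => /eqP //.
Qed.
Lemma dot_mx u v : (u *m v^T) 0 0 = dot u v.
Proof. by rewrite mxE; apply: eq_bigr => i _; rewrite mxE. Qed.

Lemma enormE u : enorm u = Num.sqrt (dot u u).
Proof. by rewrite /enorm /dot; congr Num.sqrt; apply: eq_bigr => i _; rewrite expr2. Qed.
Lemma enorm_ge0 u : 0 <= enorm u.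
Proof. by rewrite enormE sqrtr_ge0. Qed.
Lemma enorm_sq u : enorm u ^+ 2 = dot u u.
Proof. by rewrite enormE sqr_sqrtr // dot_ge0. Qed.

Lemma CS2 u v : dot u v ^+ 2 <= dot u u * dot v v.
Proof.
have [v0|vn0] := eqVneq (dot v v) 0.
  by rewrite (dot_eq0 v0) !dot0r expr0n /= mulr0.
have a0 : 0 < dot v v by rewrite lt_def vn0 dot_ge0.
have := dot_ge0 (dot v v *: u - dot u v *: v).
rewrite !(dotBl, dotBr, dotZl, dotZr) (dotC v u) => H.
have : 0 <= dot v v * (dot u u * dot v v - dot u v ^+ 2).
  by move: H; congr (_ <= _); ring.
by rewrite pmulr_rge0 // subr_ge0.
Qed.

Lemma CS u v : `|dot u v| <= enorm u * enorm v.
Proof.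
rewrite !enormE -sqrtrM ?dot_ge0 // -sqrtr_sqr ler_sqrt ?CS2 //.
by rewrite mulr_ge0 ?dot_ge0.
Qed.

Lemma enormD u v : enorm (u + v) <= enorm u + enorm v.
Proof.
rewrite {1}enormE -(ger0_norm (addr_ge0 (enorm_ge0 u) (enorm_ge0 v))).
rewrite -sqrtr_sqr ler_sqrt ?sqr_ge0 //.
rewrite !(dotDl, dotDr) sqrrD !enorm_sq (dotC v u).
have := CS u v; have := ler_norm (dot u v); lra.
Qed.

Lemma enormZ (a : R) u : enorm (a *: u) = `|a| * enorm u.
Proof.
by rewrite !enormE dotZl dotZr mulrA -expr2 sqrtrM ?sqr_ge0 // sqrtr_sqr.
Qed.
Lemma enormN u : enorm (- u) = enorm u.
Proof. by rewrite -scaleN1r enormZ normrN1 mul1r. Qed.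
Lemma enorm0 : enorm (0 : 'rV[R]_d) = 0.
Proof. by rewrite enormE dot0l sqrtr0. Qed.
Lemma enormB u v : enorm (u - v) <= enorm u + enorm v.
Proof. by rewrite -(enormN v) enormD. Qed.
Lemma enorm_sum (I : Type) (s : seq I) (P : pred I) (F : I -> 'rV[R]_d) :
  enorm (\sum_(i <- s | P i) F i) <= \sum_(i <- s | P i) enorm (F i).
Proof.
elim/big_rec2: _ => [|i x y _ H]; first by rewrite enorm0.
by apply: le_trans (enormD _ _) _; rewrite lerD2l.
Qed.
End Norm.
Section Sub.
Variables (R : rcfType) (d : nat).
Implicit Types (u v w : 'rV[R]_d).

Lemma orth_dot (S : 'M[R]_d) a b : (a <= S)%MS -> (b <= orthc S)%MS -> dot a b = 0.
Proof.
move=> /submxP [z ->]; rewrite /orthc sub_kermx => /eqP Hb.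
by rewrite dotC -dot_mx trmx_mul mulmxA Hb mul0mx mxE.
Qed.

Lemma pyth (S : 'M[R]_d) a b : (a <= S)%MS -> (b <= orthc S)%MS ->
  enorm a <= enorm (a + b).
Proof.
move=> Ha Hb; rewrite !enormE ler_sqrt ?dot_ge0 //.
rewrite !(dotDl, dotDr) (dotC b a) (orth_dot Ha Hb) !addr0.
have := dot_ge0 b; lra.
Qed.

Lemma GS (U : 'M[R]_d) n : (n <= \rank U)%N ->
  exists E : 'M[R]_(n, d), E *m E^T = 1%:M /\ (E <= U)%MS.
Proof.
elim: n => [_|n IH Hn].
  by exists 0; split; [apply/matrixP => i []|rewrite sub0mx].
have [E [EE EU]] := IH (ltnW Hn).
have rE : \rank E = n.
  apply/eqP; rewrite eqn_leq rank_leq_row /=.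
  by rewrite -{1}(mxrank1 R n) -EE mxrankM_maxl.
have : ~~ (U <= E)%MS.
  by apply/negP => /mxrankS; rewrite rE leqNgt Hn.
case/row_subPn => i Hi.
set u := row i U.
pose v := u - (u *m E^T) *m E.
have vE : v *m E^T = 0.
  by rewrite /v mulmxBl -!mulmxA EE mulmx1 subrr.
have vU : (v <= U)%MS.
  by rewrite /v addmx_sub ?eqmx_opp ?row_sub //= ?mulmx_sub // -mulNmx submxMl_sub. 
have v0 : v != 0.
  apply/negP => /eqP v0; move: Hi; rewrite -/u -[u](subrK ((u *m E^T) *m E)).
  by rewrite -/v v0 add0r submxMl.
have nv : 0 < enorm v.
  rewrite lt_def enorm_ge0 andbT; apply/negP => /eqP H.
  by move: (enorm_sq v); rewrite H expr0n /= => /esym /dot_eq0 /eqP; rewrite (negbTE v0).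
pose e := (enorm v)^-1 *: v.
have eE : e *m E^T = 0 by rewrite /e -scalemxAl vE scaler0.
have ee : e *m e^T = 1%:M.
  apply/matrixP => a b; rewrite !ord1 dot_mx -enorm_sq /e enormZ mxE /=.
  by rewrite ger0_norm ?invr_ge0 ?enorm_ge0 // mulVf ?expr1n // gt_eqF.
rewrite -addn1; exists (col_mx E e); split.
  have Ee : E *m e^T = 0 by rewrite -(trmxK E) -trmx_mul eE trmx0.
  rewrite tr_col_mx mul_col_row EE ee eE Ee.
  by rewrite -scalar_mx_block.
by rewrite col_mx_sub EU /e scalemx_sub.
Qed.

Lemma span_zero k (U : 'M[R]_d) (E : 'M[R]_(k, d)) (q : 'rV[R]_d) :
  E *m E^T = 1%:M -> (E <= U)%MS -> \rank U = k -> (q <= U)%MS ->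
  q *m E^T = 0 -> q = 0.
Proof.
move=> EE EU rU qU qE.
have rE : \rank E = k.
  apply/eqP; rewrite eqn_leq rank_leq_row /=.
  by rewrite -{1}(mxrank1 R k) -EE mxrankM_maxl.
have UE : (U <= E)%MS by rewrite -(mxrank_leqif_sup EU) rE rU.
move: (submx_trans qU UE) => /submxP [z qz].
by move: qE; rewrite qz -mulmxA EE mulmx1 => ->; rewrite mul0mx.
Qed.
End Sub.
Section Conv.
Variables (R : rcfType) (d : nat).

Lemma conv_sum (K : 'rV[R]_d -> Prop) : convex_set K ->
  forall n (w : 'I_n -> R) (x : 'I_n -> 'rV[R]_d), (forall i, 0 <= w i) ->
  \sum_i w i = 1 -> (forall i, K (x i)) -> K (\sum_i w i *: x i).
Proof.
move=> cK; elim=> [|n IH] w x w0 w1 Kx.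
  by move: w1; rewrite big_ord0 => /eqP; rewrite eq_sym oner_eq0.
rewrite big_ord_recr /=; move: w1; rewrite big_ord_recr /=.
set s := \sum_(i < n) w (widen_ord (leqnSn n) i) => w1.
have s0 : 0 <= s by apply: sumr_ge0 => i _; apply: w0.
have [/eqP|sn0] := eqVneq s 0.
  rewrite psumr_eq0 => [/allP H|i _]; last by apply: w0.
  rewrite big1 ?add0r => [|i _]; last by rewrite (eqP (H i (mem_index_enum _))) scale0r.
  by move: w1; rewrite /s big1 ?add0r => [->|i _]; [rewrite scale1r; apply: Kx|apply/eqP/H/mem_index_enum].
have sp : 0 < s by rewrite lt_def sn0 s0.
have -> : \sum_(i < n) w (widen_ord (leqnSn n) i) *: x (widen_ord (leqnSn n) i) =
  s *: \sum_(i < n) (w (widen_ord (leqnSn n) i) / s) *: x (widen_ord (leqnSn n) i).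
  rewrite scaler_sumr; apply: eq_bigr => i _; rewrite scalerA mulrCA mulfV ?mulr1 //.
have -> : w ord_max = 1 - s by rewrite -w1 addrAC subrr add0r.
apply: cK.
- apply: IH => //; first by move=> i; rewrite divr_ge0.
  by rewrite -mulr_suml mulfV.
- by apply: Kx.
- exact: s0.
- by rewrite -w1 lerDl w0.
Qed.
End Conv.

Section LinBound.
Variable (R : rcfType).

Lemma lin_bound k (B : 'M[R]_k) (x : 'rV[R]_k) (rho r H : R) :
  0 <= r -> k%:R * r < rho ->
  (forall l j, `|B l j - (l == j)%:R * (2 * rho)| <= 2 * r) ->
  (forall j, `|(x *m B) 0 j| <= H) ->
  (forall j, 2 * rho * `|x 0 j| <= H + 2 * r * \sum_l `|x 0 l|) /\
  \sum_l `|x 0 l| <= k%:R * H / (2 * (rho - k%:R * r)).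
Proof.
move=> r0 kr HB Hx.
have Hj : forall j, 2 * rho * `|x 0 j| <= H + 2 * r * \sum_l `|x 0 l|.
  move=> j.
  have E : (x *m B) 0 j = x 0 j * (2 * rho) + \sum_l x 0 l * (B l j - (l == j)%:R * (2 * rho)).
    rewrite mxE (bigD1 j) //= [in RHS](bigD1 j) //= eqxx mul1r addrA -mulrDr subrKC.
    congr (_ + _); apply: eq_bigr => l /negbTE lj; by rewrite lj mul0r subr0.
  set S := \sum_l _ in E.
  have rho0 : 0 < rho by apply: le_lt_trans kr; rewrite mulr_ge0.
  have HS : `|S| <= 2 * r * \sum_l `|x 0 l|.
    rewrite mulr_sumr; apply: le_trans (ler_norm_sum _ _ _) _.
    apply: ler_sum => l _; rewrite normrM mulrC; apply: ler_wpM2r => //.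
  have := ler_normB (x 0 j * (2 * rho) + S) S; rewrite addrK -E normrM mulrC.
  have r2 : 0 <= 2 * rho by lra.
  rewrite (ger0_norm r2).
  by move=> h; apply: le_trans h _; apply: lerD.
split => //.
set N := \sum_l `|x 0 l|.
have HN : 2 * rho * N <= k%:R * H + k%:R * (2 * r * N).
  have -> : k%:R * H + k%:R * (2 * r * N) = \sum_(l < k) (H + 2 * r * N).
    by rewrite sumr_const card_ord mulrnDl !mulr_natl.
  rewrite {1}/N mulr_sumr.
  by apply: ler_sum => l _; apply: Hj.
have kr0 : 0 < rho - k%:R * r by rewrite subr_gt0.
rewrite ler_pdivlMr ?mulr_gt0 //.
have -> : N * (2 * (rho - k%:R * r)) = 2 * rho * N - k%:R * (2 * r * N) by ring.
by rewrite lerBlDr.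
Qed.
End LinBound.
Lemma realA (R : rcfType) (rho A r k N x : R) : 0 < rho - A -> 0 <= A -> 0 <= r ->
  A = k * r ->
  2 * rho * x <= A + 2 * r * N -> N * (2 * (rho - A)) <= k * A -> x * (2 * (rho - A)) <= A.
Proof.
move=> D0 A0 r0 Ak h1 h2.
have rp : 0 < rho by lra.
have h3 : (rho - A) * (2 * rho * x) <= (rho - A) * (A + 2 * r * N) by rewrite ler_pM2l.
have h4 : r * (N * (2 * (rho - A))) <= r * (k * A) by rewrite ler_wpM2l.
rewrite -(ler_pM2l rp).
have e1 : rho * (x * (2 * (rho - A))) = (rho - A) * (2 * rho * x) by ring.
have e2 : (rho - A) * (A + 2 * r * N) = (rho - A) * A + r * (N * (2 * (rho - A))) by ring.
have e3 : r * (k * A) = A * A by rewrite Ak; ring.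
have e4 : rho * A = (rho - A) * A + A * A by ring.
rewrite e1 e4; apply: le_trans h3 _; rewrite e2 lerD2l -e3 //.
Qed.

Lemma unit_of_inj (R : fieldType) k (B : 'M[R]_k) :
  (forall x : 'rV_k, x *m B = 0 -> x = 0) -> B \in unitmx.
Proof.
move=> H; rewrite -row_free_unit.
have K0 : kermx B = 0.
  apply/row_matrixP => i; rewrite row0; apply: H.
  by rewrite -row_mul mulmx_ker row0.
have := mxrank_ker B; rewrite K0 mxrank0 => /esym /eqP; rewrite subn_eq0 => h.
by rewrite /row_free eqn_leq rank_leq_row h.
Qed.

Lemma mul_tr_dot (R : rcfType) d m p (A : 'M[R]_(m, d)) (B : 'M[R]_(p, d)) i j :
  (A *m B^T) i j = dot (row i A) (row j B).
Proof. by rewrite mxE; apply: eq_bigr => l _; rewrite !mxE. Qed.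

Lemma rv_tr_dot (R : rcfType) d p (u : 'rV[R]_d) (B : 'M[R]_(p, d)) j :
  (u *m B^T) 0 j = dot u (row j B).
Proof. by rewrite mul_tr_dot; congr dot; apply/rowP => l; rewrite !mxE. Qed.

Lemma vec_id1 (R : rcfType) d (m : R) (A B : 'rV[R]_d) :
  m *: A + (1 - m) *: B = m *: (A - B) + B.
Proof. by apply/rowP => i; rewrite !mxE; ring. Qed.

Lemma vec_id2 (R : rcfType) d (m m' : R) (a b c e : 'rV[R]_d) :
  (m *: a + (1 - m) *: b) - (m' *: c + (1 - m') *: e) =
  m *: (a - c) + (1 - m) *: (b - e) + (m - m') *: (c - e).
Proof. by apply/rowP => i; rewrite !mxE; ring. Qed.

Lemma vec_id3 (R : rcfType) d (m : R) (a b c e : 'rV[R]_d) :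
  (m *: a + (1 - m) *: b) - (m *: c + (1 - m) *: e) =
  m *: (a - c) + (1 - m) *: (b - e).
Proof. by apply/rowP => i; rewrite !mxE; ring. Qed.

Lemma path_dev (R : rcfType) d (z : nat -> 'rV[R]_d) n t : (t <= n)%N ->
  enorm (z t - z n) <= \sum_(0 <= s < n) enorm (z s - z s.+1).
Proof.
move=> tn.
have -> : z t - z n = \sum_(t <= s < n) (z s - z s.+1).
  rewrite (telescope_sumr_eq (fun s => - z s)) // => [|s _]; first by rewrite opprK addrC.
  by rewrite opprK addrC.
apply: le_trans (enorm_sum _ _ _) _.
rewrite [X in _ <= X](@big_cat_nat _ _ _ t) /= ?lerDr //.
by apply: sumr_ge0 => s _; apply: enorm_ge0.
Qed.

Lemma entryD (R : rcfType) m p (A C : 'M[R]_(m, p)) i j : (A + C) i j = A i j + C i j.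
Proof. by rewrite mxE. Qed.
Lemma entryZ (R : rcfType) m p (a : R) (A : 'M[R]_(m, p)) i j : (a *: A) i j = a * A i j.
Proof. by rewrite mxE. Qed.
Lemma entryN (R : rcfType) m p (A : 'M[R]_(m, p)) i j : (- A) i j = - A i j.
Proof. by rewrite mxE. Qed.
Lemma entryB (R : rcfType) m p (A C : 'M[R]_(m, p)) i j : (A - C) i j = A i j - C i j.
Proof. by rewrite !mxE. Qed.

Lemma subB_sub (R : rcfType) m p q (A C : 'M[R]_(m, p)) (S : 'M[R]_(q, p)) :
  (A <= S)%MS -> (C <= S)%MS -> (A - C <= S)%MS.
Proof. by move=> hA hC; rewrite addmx_sub // -scaleN1r scalemx_sub. Qed.

Section Main.
Variables (R : rcfType) (d k n : nat) (r g' g : R).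
Variables (K : nat -> 'rV[R]_d -> Prop) (V : 'M[R]_d) (E : 'M[R]_(k, d)).
Variables (zp zm wp wm : 'I_k -> nat -> 'rV[R]_d).
Hypotheses (k1 : (1 <= k)%N) (r0 : 0 < r) (g'0 : 0 <= g') (gk : (12 * k)%:R <= g).
Hypothesis cvx : forall t, (t <= n)%N -> convex_set (K t).
Hypotheses (EE : E *m E^T = 1%:M) (EU : (E <= orthc V)%MS) (rU : \rank (orthc V) = k).
Hypotheses (Kp : forall l t, (t <= n)%N -> K t (zp l t))
           (Km : forall l t, (t <= n)%N -> K t (zm l t)).
Hypotheses (Wp : forall l t, (t <= n)%N ->
   [/\ (wp l t <= V)%MS, (zp l t - wp l t <= orthc V)%MS & enorm (wp l t) <= g' * r])
  (Wm : forall l t, (t <= n)%N ->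
   [/\ (wm l t <= V)%MS, (zm l t - wm l t <= orthc V)%MS & enorm (wm l t) <= g' * r]).
Hypotheses (Lp : forall l, \sum_(0 <= t < n) enorm (zp l t - zp l t.+1) <= r)
           (Lm : forall l, \sum_(0 <= t < n) enorm (zm l t - zm l t.+1) <= r).
Hypotheses (Ep : forall l j, (zp l n *m E^T) 0 j = (l == j)%:R * (g * r))
           (Em : forall l j, (zm l n *m E^T) 0 j = - ((l == j)%:R * (g * r))).

Let rho := g * r.
Let kR := (k%:R : R).

Lemma kR_gt0 : 0 < kR.
Proof. by rewrite /kR ltr0n. Qed.

Lemma gk' : 12 * kR <= g.
Proof. by move: gk; rewrite natrM. Qed.

Lemma kr_lt : kR * r < rho.
Proof.
have := gk'; have := kR_gt0 => h1 h2.
rewrite /rho ltr_pM2r //; lra.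
Qed.

Lemma row_norm j : enorm (row j E) = 1.
Proof.
rewrite enormE -mul_tr_dot EE mxE eqxx /=; exact: sqrtr1.
Qed.

Lemma coord_le (z : 'rV[R]_d) j : `|(z *m E^T) 0 j| <= enorm z.
Proof. by rewrite rv_tr_dot; apply: le_trans (CS _ _) _; rewrite row_norm mulr1. Qed.

Lemma coordB (a b : 'rV[R]_d) j : ((a - b) *m E^T) 0 j = (a *m E^T) 0 j - (b *m E^T) 0 j.
Proof. by rewrite mulmxBl !mxE. Qed.

Lemma dev_p l t j : (t <= n)%N -> `|(zp l t *m E^T) 0 j - (zp l n *m E^T) 0 j| <= r.
Proof.
move=> tn; rewrite -coordB; apply: le_trans (coord_le _ _) _.
by apply: le_trans (path_dev (zp l) tn) (Lp l).
Qed.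

Lemma dev_m l t j : (t <= n)%N -> `|(zm l t *m E^T) 0 j - (zm l n *m E^T) 0 j| <= r.
Proof.
move=> tn; rewrite -coordB; apply: le_trans (coord_le _ _) _.
by apply: le_trans (path_dev (zm l) tn) (Lm l).
Qed.

Definition G t (m : 'rV[R]_k) := \sum_l (m 0 l *: zp l t + (1 - m 0 l) *: zm l t).
Definition Gw t (m : 'rV[R]_k) := \sum_l (m 0 l *: wp l t + (1 - m 0 l) *: wm l t).
Definition B t : 'M[R]_k := \matrix_(l, j) (((zp l t - zm l t) *m E^T) 0 j).
Definition c t : 'rV[R]_k := \sum_l zm l t *m E^T.

Lemma FE t m : G t m *m E^T = m *m B t + c t.
Proof.
rewrite /G mulmx_suml mulmx_sum_row /c -big_split; apply: eq_bigr => l _ /=.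
have -> : row l (B t) = (zp l t - zm l t) *m E^T.
  by apply/rowP => j; rewrite !mxE.
by rewrite mulmxDl -!scalemxAl vec_id1 mulmxBl.
Qed.

Lemma Bentry t l j : (t <= n)%N -> `|B t l j - (l == j)%:R * (2 * rho)| <= 2 * r.
Proof.
move=> tn.
have -> : (l == j)%:R * (2 * rho) = (zp l n *m E^T) 0 j - (zm l n *m E^T) 0 j.
  by rewrite Ep Em /rho; ring.
rewrite mxE coordB.
have := dev_p l j tn; have := dev_m l j tn.
set a := (zp l t *m E^T) 0 j; set b := (zm l t *m E^T) 0 j.
set a' := (zp l n *m E^T) 0 j; set b' := (zm l n *m E^T) 0 j => h1 h2.
have -> : a - b - (a' - b') = (a - a') - (b - b') by ring.
by apply: le_trans (ler_normB _ _) _; lra.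
Qed.


Lemma Bunit t : (t <= n)%N -> B t \in unitmx.
Proof.
move=> tn; apply: unit_of_inj => x hx.
have Hx : forall j, `|(x *m B t) 0 j| <= 0 by move=> j; rewrite hx mxE normr0.
have [_ hN] := @lin_bound R k (B t) x rho r 0 (ltW r0) kr_lt
  (fun l j => Bentry l j tn) Hx.
move: hN; rewrite mulr0 mul0r => hN.
have h0 : \sum_l `|x 0 l| = 0 by apply/le_anti; rewrite hN sumr_ge0.
apply/rowP => l; rewrite mxE; apply/normr0_eq0.
by move/psumr_eq0P: h0 => ->.
Qed.

Definition mu t : 'rV[R]_k := - c t *m invmx (B t).

Lemma muB t : (t <= n)%N -> mu t *m B t = - c t.
Proof. by move=> tn; rewrite /mu mulmxKV // Bunit. Qed.

Lemma G0 t : (t <= n)%N -> G t (mu t) *m E^T = 0.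
Proof. by move=> tn; rewrite FE muB // addNr. Qed.

Definition eps := kR * r / (2 * (rho - kR * r)).

Lemma half_half : 1 - 2^-1 = 2^-1 :> R.
Proof.
have h2 : (2 : R) != 0 by rewrite pnatr_eq0.
by apply: (mulfI h2); rewrite mulrBr mulfV // mulr1; ring.
Qed.

Lemma eps_le : eps <= 2^-1.
Proof.
have := kr_lt; rewrite /rho => h; have := gk' => h'; have := kR_gt0 => hk.
have h3 : 12 * kR * r <= g * r by rewrite ler_wpM2r // ltW.
have h4 : 12 * kR * r = 12 * (kR * r) by ring.
rewrite /eps /rho ler_pdivrMr; last by lra.
rewrite mulrA mulVf ?pnatr_eq0 // mul1r; lra.
Qed.

Lemma mu_bound t l : (t <= n)%N -> `|mu t 0 l - 2^-1| <= eps.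
Proof.
move=> tn; pose h : 'rV[R]_k := const_mx 2^-1; pose x := mu t - h.
have Gn : G n h *m E^T = 0.
  apply/rowP => j; rewrite /G mulmx_suml !mxE summxE big1 // => i _.
  by rewrite mulmxDl -!scalemxAl entryD !entryZ Ep Em mxE half_half; ring.
have hxB : x *m B t = - ((G t h - G n h) *m E^T).
  by rewrite [in RHS]mulmxBl Gn subr0 FE /x mulmxBl muB // opprD addrC.
have Hx : forall j, `|(x *m B t) 0 j| <= kR * r.
  move=> j; rewrite hxB mxE normrN; apply: le_trans (coord_le _ _) _.
  rewrite /G -sumrB; apply: le_trans (enorm_sum _ _ _) _.
  have -> : kR * r = \sum_(i < k) r by rewrite sumr_const card_ord /kR mulr_natl.
  apply: ler_sum => i _.
  rewrite vec_id3; apply: le_trans (enormD _ _) _; rewrite !enormZ !mxE half_half.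
  rewrite ger0_norm ?invr_ge0 ?ler0n //.
  have := path_dev (zp i) tn; have := path_dev (zm i) tn; have := Lp i; have := Lm i.
  have := enorm_ge0 (zp i t - zp i n); have := enorm_ge0 (zm i t - zm i n).
  set u := enorm (zp i t - zp i n); set v := enorm (zm i t - zm i n).
  move=> u0 v0 h1 h2 h3 h4.
  lra.
have [hj hN] := @lin_bound R k (B t) x rho r (kR * r) (ltW r0) kr_lt
  (fun l j => Bentry l j tn) Hx.
have D0 : 0 < rho - kR * r by rewrite subr_gt0 kr_lt.
have hN' : (\sum_l `|x 0 l|) * (2 * (rho - kR * r)) <= kR * (kR * r).
  by rewrite -ler_pdivlMr // mulr_gt0.
have := realA D0 (mulr_ge0 (ltW kR_gt0) (ltW r0)) (ltW r0) (erefl _) (hj l) hN'.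
rewrite -ler_pdivlMr ?mulr_gt0 // /x !mxE.
by [].
Qed.


Lemma mu01 t l : (t <= n)%N ->
  [/\ 0 <= mu t 0 l, mu t 0 l <= 1, mu t 0 l <= 2^-1 + eps & 1 - mu t 0 l <= 2^-1 + eps].
Proof.
move=> tn; have := mu_bound l tn; rewrite ler_norml => /andP[h1 h2].
have := eps_le; have hh := half_half => h3.
split; lra.
Qed.

Definition a t := \sum_l (enorm (zp l t - zp l t.+1) + enorm (zm l t - zm l t.+1)).

Lemma delta_bound t : (t < n)%N ->
  \sum_l `|mu t 0 l - mu t.+1 0 l| <= kR * a t / (2 * (rho - kR * r)).
Proof.
move=> tn1; have tn := ltnW tn1.
pose m := mu t.+1; pose x := mu t - m.
have hxB : x *m B t = - ((G t m - G t.+1 m) *m E^T).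
  by rewrite [in RHS]mulmxBl G0 // subr0 FE /x mulmxBl muB // opprD addrC.
have Hx : forall j, `|(x *m B t) 0 j| <= a t.
  move=> j; rewrite hxB mxE normrN; apply: le_trans (coord_le _ _) _.
  rewrite /G -sumrB; apply: le_trans (enorm_sum _ _ _) _.
  apply: ler_sum => i _.
  rewrite vec_id3; apply: le_trans (enormD _ _) _; rewrite !enormZ.
  have [h0 h1 _ _] := mu01 i tn1.
  rewrite (ger0_norm h0) (ger0_norm (_ : 0 <= 1 - m 0 i)); last by rewrite subr_ge0.
  apply: lerD; rewrite -[X in _ <= X]mul1r; apply: ler_wpM2r; rewrite ?enorm_ge0 //.
  - by rewrite lerBlDr lerDl.
have [_ hN] := @lin_bound R k (B t) x rho r (a t) (ltW r0) kr_lt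
  (fun l j => Bentry l j tn) Hx.
by move: hN; congr (_ <= _); apply: eq_bigr => l _; rewrite !mxE.
Qed.

Definition Y t := kR^-1 *: G t (mu t).
Definition Yw t := kR^-1 *: Gw t (mu t).

Lemma Y_K t : (t <= n)%N -> K t (Y t).
Proof.
move=> tn; rewrite /Y /G scaler_sumr.
apply: (conv_sum (cvx tn) (w := fun _ => kR^-1)).
- by move=> i; rewrite invr_ge0 ltW // kR_gt0.
- by rewrite sumr_const card_ord -mulr_natl mulfV // gt_eqF // kR_gt0.
- move=> i; have [h0 h1 _ _] := mu01 i tn.
  by apply: cvx => //; [apply: Kp | apply: Km].
Qed.

Lemma YwV t : (t <= n)%N -> (Yw t <= V)%MS.
Proof.
move=> tn; rewrite /Yw scalemx_sub // /Gw summx_sub // => l _.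
have [h1 _ _] := Wp l tn; have [h2 _ _] := Wm l tn.
by rewrite addmx_sub // scalemx_sub.
Qed.

Lemma VE (v : 'rV[R]_d) : (v <= V)%MS -> v *m E^T = 0.
Proof.
move=> vV; apply/rowP => j; rewrite rv_tr_dot mxE; apply: orth_dot vV _.
exact: submx_trans (row_sub j E) EU.
Qed.

Lemma YeqYw t : (t <= n)%N -> Y t = Yw t.
Proof.
move=> tn; apply/eqP; rewrite -subr_eq0; apply/eqP.
apply: (span_zero EE EU rU).
- rewrite /Y /Yw -scalerBr scalemx_sub // /G /Gw -sumrB summx_sub // => l _.
  have [_ h1 _] := Wp l tn; have [_ h2 _] := Wm l tn.
  by rewrite vec_id3 addmx_sub // scalemx_sub.
- by rewrite mulmxBl (VE (YwV tn)) subr0 /Y -scalemxAl G0 // scaler0.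
Qed.

Definition cst := kR^-1 * (2^-1 + eps) + g' * r / (rho - kR * r).

Lemma wdiff (z w : 'I_k -> nat -> 'rV[R]_d) l t : (t < n)%N ->
  (forall l t, (t <= n)%N -> [/\ (w l t <= V)%MS, (z l t - w l t <= orthc V)%MS & enorm (w l t) <= g' * r]) ->
  enorm (w l t - w l t.+1) <= enorm (z l t - z l t.+1).
Proof.
move=> tn1 W; have [h1 h2 _] := W l t (ltnW tn1); have [h3 h4 _] := W l t.+1 tn1.
have -> : z l t - z l t.+1 = (w l t - w l t.+1) + ((z l t - w l t) - (z l t.+1 - w l t.+1)).
  by apply/rowP => i; rewrite !mxE; ring.
by apply: (pyth (S := V)); apply: subB_sub.
Qed.

Lemma step t : (t < n)%N -> enorm (Y t - Y t.+1) <= cst * a t.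
Proof.
move=> tn1; have tn := ltnW tn1.
rewrite !YeqYw // /Yw -scalerBr enormZ /Gw -sumrB.
have hk := kR_gt0.
rewrite ger0_norm; last by rewrite invr_ge0 ltW.
have D0 : 0 < rho - kR * r by rewrite subr_gt0 kr_lt.
have H1 : enorm (\sum_l ((mu t 0 l *: wp l t + (1 - mu t 0 l) *: wm l t) -
     (mu t.+1 0 l *: wp l t.+1 + (1 - mu t.+1 0 l) *: wm l t.+1)))
  <= (2^-1 + eps) * a t + 2 * (g' * r) * \sum_l `|mu t 0 l - mu t.+1 0 l|.
  apply: le_trans (enorm_sum _ _ _) _.
  rewrite /a mulr_sumr mulr_sumr -big_split /=; apply: ler_sum => l _.
  rewrite vec_id2; apply: le_trans (enormD _ _) _.
  apply: lerD; first (apply: le_trans (enormD _ _) _; rewrite mulrDr; apply: lerD).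
  - have [h0 _ h2 _] := mu01 l tn.
    rewrite enormZ ger0_norm //; apply: ler_pM => //; first by rewrite enorm_ge0.
    by apply: wdiff.
  - have [_ h1 _ h3] := mu01 l tn.
    rewrite enormZ ger0_norm ?subr_ge0 //; apply: ler_pM => //; first by rewrite subr_ge0.
      by rewrite enorm_ge0.
    by apply: wdiff.
  - rewrite enormZ mulrC; apply: ler_wpM2r => //.
    have [_ _ h1] := Wp l tn1; have [_ _ h2] := Wm l tn1.
    by apply: le_trans (enormB _ _) _; lra.
have H2 := delta_bound tn1.
have ik : 0 <= kR^-1 by rewrite invr_ge0 ltW.
have H1' := ler_wpM2l ik H1; apply: le_trans H1' _.
have g'r : 0 <= 2 * (g' * r) by rewrite mulr_ge0 // mulr_ge0 // ltW.
have H2' := ler_wpM2l ik (lerD (lexx ((2^-1 + eps) * a t)) (ler_wpM2l g'r H2)).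
apply: le_trans H2' _.
rewrite /cst le_eqVlt; apply/orP; left; apply/eqP.
field; rewrite ?gt_eqF //.
Qed.


Lemma final_real : cst * ((r + r) *+ k) <= (1 + (2 + 4 * g') / g * kR) * r.
Proof.
have hk := kR_gt0; have h12 := gk'.
have gk0 : 0 < g - kR by lra.
have g0 : 0 < g by lra.
have e1 : cst * ((r + r) *+ k) = r + kR * r * (1 + 2 * g') / (g - kR).
  have n1 : g - kR != 0 by rewrite gt_eqF.
  have n2 : g * r - kR * r != 0.
    have -> : g * r - kR * r = (g - kR) * r by ring.
    by rewrite gt_eqF // mulr_gt0.
  have n3 : kR != 0 by rewrite gt_eqF.
  rewrite -mulr_natl /cst /eps /rho; field.
  by rewrite n1 n2 n3.
rewrite e1 [X in _ <= X]mulrDl mul1r lerD2l.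
pose P := kR * r * (1 + 2 * g').
have P0 : 0 <= P.
  apply: mulr_ge0; last by have := g'0; lra.
  by apply: mulr_ge0; apply: ltW.
have q : 1 <= 2 * (g - kR) / g by rewrite ler_pdivlMr // mul1r; lra.
have q' : P * 1 <= P * (2 * (g - kR) / g) by rewrite ler_wpM2l.
rewrite -(ler_pM2r gk0) -/P.
have -> : P / (g - kR) * (g - kR) = P * 1 by field; rewrite gt_eqF.
have -> : (2 + 4 * g') / g * kR * r * (g - kR) = P * (2 * (g - kR) / g).
  by rewrite /P; field; rewrite gt_eqF.
exact: q'.
Qed.

Lemma sum_bound : \sum_(0 <= t < n) enorm (Y t - Y t.+1) <= (1 + (2 + 4 * g') / g * kR) * r.
Proof.
apply: le_trans (final_real).
apply: le_trans (ler_sum_nat (G := fun t => cst * a t) _) _.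
  by move=> t /andP[_ tn]; apply: step.
rewrite -mulr_sumr.
have c0 : 0 <= cst.
  have hk := kR_gt0; have D0 : 0 < rho - kR * r by rewrite subr_gt0 kr_lt.
  have e0 : 0 <= eps.
    by apply: divr_ge0; [apply: mulr_ge0; apply: ltW | apply: mulr_ge0 => //; apply: ltW].
  rewrite /cst; apply: addr_ge0.
  - apply: mulr_ge0; first by rewrite invr_ge0; apply: ltW.
    by rewrite addr_ge0 // invr_ge0 ler0n.
  - by apply: divr_ge0; [apply: mulr_ge0 => //; apply: ltW | apply: ltW].
apply: ler_wpM2l => //.
rewrite /a exchange_big /=.
have -> : (r + r) *+ k = \sum_(l < k) (r + r) by rewrite sumr_const card_ord.
apply: ler_sum => l _.
by rewrite big_split /=; apply: lerD.
Qed.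


Lemma main_sec : exists Y : nat -> 'rV[R]_d,
  (forall t, (t < n.+1)%N -> K t (Y t) /\ (Y t <= V)%MS) /\
  \sum_(0 <= t < n) enorm (Y t - Y t.+1) <= (1 + (2 + 4 * g') / g * k%:R) * r.
Proof.
exists Y; split; last exact: sum_bound.
move=> t tn; split; first exact: Y_K.
by rewrite YeqYw // YwV.
Qed.

End Main.


Theorem lemma9 (R : rcfType) (d k T : nat) (r gamma' gamma : R)
  (K : nat -> 'rV[R]_d -> Prop) (V : 'M[R]_d) :
  (1 <= k)%N -> (k <= d)%N ->
  0 < r -> 0 <= gamma' -> (12 * k)%:R <= gamma ->
  (forall t, (t < T)%N -> convex_set (K t)) ->
  \rank V = (d - k)%N ->
  let C := fun y : 'rV[R]_d =>
    exists w, is_orth_proj V y w /\ enorm w <= gamma' * r in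
  let Omega := fun y : 'rV[R]_d =>
    C y /\ exists ys : nat -> 'rV[R]_d,
      ys T.-1 = y /\
      (forall t, (t < T)%N -> K t (ys t) /\ C (ys t)) /\
      \sum_(0 <= t < T.-1) enorm (ys t - ys t.+1) <= r in
  (forall theta : 'rV[R]_d, (theta <= orthc V)%MS -> enorm theta = gamma * r ->
     exists y, Omega y /\ is_orth_proj (orthc V) y theta) ->
  exists Y : nat -> 'rV[R]_d,
    (forall t, (t < T)%N -> K t (Y t) /\ (Y t <= V)%MS) /\
    \sum_(0 <= t < T.-1) enorm (Y t - Y t.+1)
      <= (1 + (2 + 4 * gamma') / gamma * k%:R) * r.
Proof.
move=> k1 kd r0 g'0 gk cvx rV C Omega Hyp.
have g0 : 0 < gamma.
  apply: lt_le_trans gk; rewrite ltr0n muln_gt0 //.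
have rhs0 : 0 <= (1 + (2 + 4 * gamma') / gamma * k%:R) * r.
  apply: mulr_ge0; last exact: ltW.
  apply: addr_ge0 => //; apply: mulr_ge0; last exact: ler0n.
  apply: divr_ge0; last exact: ltW.
  by rewrite addr_ge0 // mulr_ge0.
have [T0|Tp] := posnP T.
  exists (fun _ => 0); split; first by move=> t; rewrite T0.
  by rewrite T0 big_geq.
set n := T.-1.
have TE : T = n.+1 by rewrite /n prednK.
have rU : \rank (orthc V) = k by rewrite /orthc mxrank_ker mxrank_tr rV subKn.
have [E [EE EU]] := @GS R d (orthc V) k (eq_leq (esym rU)).
have eE : forall l j, dot (row l E) (row j E) = (l == j)%:R.
  by move=> l j; rewrite -mul_tr_dot EE mxE.
have rowU : forall l, (row l E <= orthc V)%MS.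
  by move=> l; apply: submx_trans (row_sub l E) EU.
have rown : forall l, enorm (row l E) = 1.
  by move=> l; rewrite enormE eE eqxx sqrtr1.
pose rho := gamma * r.
have Hp : forall th : 'rV[R]_d, exists ys : nat -> 'rV[R]_d,
   (th <= orthc V)%MS -> enorm th = rho ->
   [/\ (forall t, (t < T)%N -> K t (ys t) /\ C (ys t)),
       \sum_(0 <= t < n) enorm (ys t - ys t.+1) <= r &
       ys n *m E^T = th *m E^T].
  move=> th; case: (classic ((th <= orthc V)%MS /\ enorm th = rho)) => [[h1 h2]|hn].
    have [y [[Cy [ys [yT [HK Hs]]]] [thU Hyth]]] := Hyp th h1 h2.
    exists ys => _ _; split => //.
    apply/eqP; rewrite -subr_eq0 -mulmxBl; apply/eqP.
    move: Hyth; rewrite /orthc sub_kermx /n yT => /eqP H0.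
    case/submxP: EU => Z ->.
    by rewrite trmx_mul mulmxA -/(orthc V) H0 mul0mx.
  by exists (fun _ => 0) => h1 h2; exfalso; apply: hn.
pose pathf th := proj1_sig (constructive_indefinite_description _ (Hp th)).
have pathP := fun th => proj2_sig (constructive_indefinite_description _ (Hp th)).
have Hw : forall y : 'rV[R]_d, exists w, C y -> is_orth_proj V y w /\ enorm w <= gamma' * r.
  move=> y; case: (classic (C y)) => [[w Hw]|hn]; first by exists w.
  by exists 0.
pose wf y := proj1_sig (constructive_indefinite_description _ (Hw y)).
have wfP := fun y => proj2_sig (constructive_indefinite_description _ (Hw y)).
pose zp l := pathf (rho *: row l E).
pose zm l := pathf ((- rho) *: row l E).
have rho0 : 0 < rho by rewrite mulr_gt0.
have np : forall l, enorm (rho *: row l E) = rho.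
  by move=> l; rewrite enormZ rown mulr1 ger0_norm //; apply: ltW.
have nm : forall l, enorm ((- rho) *: row l E) = rho.
  by move=> l; rewrite enormZ rown mulr1 normrN ger0_norm //; apply: ltW.
have Hzp := fun l => pathP (rho *: row l E) (scalemx_sub _ (rowU l)) (np l).
have Hzm := fun l => pathP ((- rho) *: row l E) (scalemx_sub _ (rowU l)) (nm l).
have TnE : forall t, (t <= n)%N = (t < T)%N by move=> t; rewrite TE ltnS.
have := @main_sec R d k n r gamma' gamma K V E zp zm (fun l t => wf (zp l t)) (fun l t => wf (zm l t))
  k1 r0 g'0 gk.
rewrite TE /=; apply.
- by move=> t; rewrite TnE; apply: cvx.
- exact: EE.
- exact: EU.
- exact: rU.
- by move=> l t; rewrite TnE; have [H _ _] := Hzp l => /H [].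
- by move=> l t; rewrite TnE; have [H _ _] := Hzm l => /H [].
- move=> l t; rewrite TnE; have [H _ _] := Hzp l => /H [_ /wfP [[h1 h2] h3]].
  by split.
- move=> l t; rewrite TnE; have [H _ _] := Hzm l => /H [_ /wfP [[h1 h2] h3]].
  by split.
- by move=> l; have [_ H _] := Hzp l.
- by move=> l; have [_ H _] := Hzm l.
- move=> l j; have [_ _ ->] := Hzp l.
  by rewrite -scalemxAl mxE rv_tr_dot eE mulrC.
- move=> l j; have [_ _ ->] := Hzm l.
  by rewrite -scalemxAl mxE rv_tr_dot eE mulrC mulrN.
Qed.
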